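(* Let $d\ge1$. Let $G$ be a $3$-connected ordered graph on $n$ vertices with $m$ edges, and let $H$ be an ordered graph with no isolated vertices and with $m$ edges. Suppose $M^{\mathbb E}_{d,G}=M^{\mathbb E}_{d,H}$. Then there is a bijection $\sigma$ from the vertex set of $G$ to the vertex set of $H$ such that for every $k$, if the $k$-th edge of $G$ is $\{i,j\}$ then the $k$-th edge of $H$ is $\{\sigma(i),\sigma(j)\}$.
   Context: An ordered graph is a finite vertex set together with an ordered sequence $(E_1,\dots,E_m)$ of distinct unordered pairs of distinct vertices. For a real configuration $\mathbf p$ (one point $\mathbf p_i\in\mathbb R^d$ per vertex), $m^{\mathbb E}_G(\mathbf p)\in\mathbb R^m$ has $k$-th coordinate $\|\mathbf p_i-\mathbf p_j\|^2$ where $E_k=\{i,j\}$. The Euclidean measurement set $M^{\mathbb E}_{d,G}\subseteq\mathbb R^m$ is the image of $m^{\mathbb E}_G$ over all real configurations in $\mathbb R^d$. *)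

(* Defs.v *)
From Stdlib Require Import Reals.
From mathcomp Require Import all_boot.

Set Implicit Arguments.
Unset Strict Implicit.
Unset Printing Implicit Defensive.

(* An ordered graph with vertex type V and m edges: E k = (i, j) represents
   the unordered pair {i, j} which is the k-th edge. *)
Definition same_upair (V : eqType) (e f : V * V) : Prop :=
  (e.1 = f.1 /\ e.2 = f.2) \/ (e.1 = f.2 /\ e.2 = f.1).

Definition is_ordered_graph (V : finType) (m : nat) (E : 'I_m -> V * V) : Prop :=
  (forall k, (E k).1 <> (E k).2) /\
  (forall k l, same_upair (E k) (E l) -> k = l).

Definition sqdist (d : nat) (x y : 'I_d -> R) : R :=
  \big[Rplus/R0]_(c < d) Rmult (Rminus (x c) (y c)) (Rminus (x c) (y c)).

Definition meas (V : finType) (m d : nat) (E : 'I_m -> V * V)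
  (p : V -> 'I_d -> R) : 'I_m -> R :=
  fun k => sqdist (p (E k).1) (p (E k).2).

Definition meas_set (V : finType) (m d : nat) (E : 'I_m -> V * V)
  (x : 'I_m -> R) : Prop :=
  exists p : V -> 'I_d -> R, forall k, x k = meas E p k.

Definition adj (V : finType) (m : nat) (E : 'I_m -> V * V) : rel V :=
  fun u v => [exists k, (E k == (u, v)) || (E k == (v, u))].

Definition adj_minus (V : finType) (m : nat) (E : 'I_m -> V * V)
  (S : {set V}) : rel V :=
  fun u v => [&& u \notin S, v \notin S & adj E u v].

Definition k_connected (V : finType) (m : nat) (E : 'I_m -> V * V) (k : nat)
  : Prop :=
  k < #|V| /\
  forall S : {set V}, #|S| < k ->
    forall u v, u \notin S -> v \notin S -> connect (adj_minus E S) u v.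

Definition no_isolated (V : finType) (m : nat) (E : 'I_m -> V * V) : Prop :=
  forall v, exists k, v = (E k).1 \/ v = (E k).2.

(* Main.v *)
Require Import Defs.
From Stdlib Require Import Reals Lra FunctionalExtensionality Classical ClassicalEpsilon.
From HB Require Import structures.
From mathcomp Require Import all_boot.
Set Implicit Arguments.
Unset Strict Implicit.

Section Aux.
Local Open Scope R_scope.

HB.instance Definition _ := Monoid.isComLaw.Build R R0 Rplus (fun a b c => esym (Rplus_assoc a b c)) Rplus_comm Rplus_0_l.

Lemma sqdist_sym d (x y : 'I_d -> R) : sqdist x y = sqdist y x.
Proof. apply: eq_bigr => c _. ring. Qed.

Lemma sqdist_ge0 d (x y : 'I_d -> R) : Rle 0 (sqdist x y).
Proof.
rewrite /sqdist; apply: (big_ind (fun r => Rle 0 r)); [lra| intros; lra|].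
move=> c _; apply: Rle_0_sqr.
Qed.

Lemma sqdist0 d (x y : 'I_d -> R) : sqdist x y = 0 -> x = y.
Proof.
move=> H; apply: functional_extensionality => c.
have H1 := H; rewrite /sqdist (bigD1 c) //= in H1.
move: H1; set S := \big[_/_]_(i < d | _) _ => H1.
have H2 : Rle 0 S.
  rewrite /S; apply: (big_ind (fun r => Rle 0 r)); [lra| intros; lra|].
  move=> i _; apply: Rle_0_sqr.
have H3 := Rle_0_sqr (x c - y c). rewrite /Rsqr in H3.
have : ((x c - y c) * (x c - y c) = 0) by lra.
move/Rmult_integral => [] ?; lra.
Qed.

Lemma sqdist_xx d (x : 'I_d -> R) : sqdist x x = 0.
Proof.
rewrite /sqdist; rewrite (eq_bigr (fun _ => 0)); last by move=> c _; ring.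
elim: d x => [|d IH] x; first by rewrite big_ord0.
rewrite big_ord_recr /= (IH (fun _ => 0)). ring.
Qed.

Definition pt d (b : bool) : 'I_d -> R := fun _ => if b then 1 else 0.
Arguments pt : clear implicits.

Lemma sum_const1 d : \big[Rplus/R0]_(c < d) 1 = INR d.
Proof.
elim: d => [|d IH]; first by rewrite big_ord0.
rewrite big_ord_recr /= IH; case: d {IH} => /= [|d]; lra.
Qed.

Lemma sqdist_pt d b1 b2 : sqdist (pt d b1) (pt d b2) = if b1 == b2 then 0 else INR d.
Proof.
case: b1; case: b2 => /=; rewrite ?sqdist_xx //; rewrite -sum_const1; apply: eq_bigr => c _;
rewrite /pt /=; ring.
Qed.

Lemma conn_eq (T : finType) (e : rel T) (A : Type) (f : T -> A) u w :
  (forall x y, e x y -> f x = f y) -> connect e u w -> f u = f w.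
Proof.
move=> He /connectP [p Hp ->]; elim: p u Hp => [|y p IH] u //= /andP [Hxy Hp].
rewrite (He _ _ Hxy); exact: IH.
Qed.

Lemma walk (T : finType) (e : rel T) (A B : T -> Prop) u w :
  (forall x y, e x y -> A x -> A y \/ B x) -> connect e u w -> A u -> B w ->
  exists z, A z /\ B z.
Proof.
move=> He /connectP [p Hp ->]; elim: p u Hp => [|y p IH] u /=.
  by move=> _ Hu Hw; exists u; split.
move=> /andP [Hxy Hp] Hu Hl; case: (He _ _ Hxy Hu) => [Hy|Hb]; first exact: (IH _ Hp Hy Hl).
by exists u; split.
Qed.

Lemma adj_minusP (V : finType) m (E : 'I_m -> V * V) S u w :
  adj_minus E S u w -> [/\ u \notin S, w \notin S &
     exists k, E k = (u, w) \/ E k = (w, u)].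
Proof.
rewrite /adj_minus /adj => /and3P [Hu Hw /existsP [k /orP [/eqP H|/eqP H]]].
  by split => //; exists k; left.
by split => //; exists k; right.
Qed.

Lemma meas_pair (V : finType) m d (E : 'I_m -> V * V) (q : V -> 'I_d -> R) k u w :
  E k = (u, w) \/ E k = (w, u) -> meas E q k = sqdist (q u) (q w).
Proof. by rewrite /meas => -[] ->; rewrite // sqdist_sym. Qed.

Definition ep (V : finType) m (E : 'I_m -> V * V) (v : V) (k : 'I_m) : bool :=
  (v == (E k).1) || (v == (E k).2).

Definition Rprop m (M : ('I_m -> R) -> Prop) (D P : pred 'I_m) : Prop :=
  forall x y, M x -> M y -> exists z, M z /\
    (forall k, ~~ D k -> P k -> z k = x k) /\
    (forall k, ~~ D k -> ~~ P k -> z k = y k).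

Lemma ep_other (V : finType) m (E : 'I_m -> V * V) v k :
  is_ordered_graph E -> ep E v k -> exists u, u <> v /\ (E k = (v, u) \/ E k = (u, v)).
Proof.
move=> [Hl _]; rewrite /ep; move: (Hl k); case: (E k) => a b /= Hab.
case/orP => /eqP ->; [exists b | exists a]; split; auto.
Qed.

Lemma nep_pair (V : finType) m (E : 'I_m -> V * V) v k u w :
  E k = (u, w) \/ E k = (w, u) -> u != v -> w != v -> ~~ ep E v k.
Proof.
rewrite /ep => -[] -> /= Hu Hw; apply/negP => /orP [] /eqP H;
by [move: Hu; rewrite H eqxx | move: Hw; rewrite H eqxx].
Qed.

Lemma INR_d_neq0 d : (1 <= d)%N -> INR d <> 0.
Proof. move=> Hd; apply: not_0_INR => H; rewrite H in Hd. by []. Qed.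

Lemma nep_inv (V : finType) m (E : 'I_m -> V * V) v k u w :
  ~~ ep E v k -> E k = (u, w) \/ E k = (w, u) -> u != v /\ w != v.
Proof.
rewrite /ep => H [] Hk; rewrite Hk /= in H; case/norP: H => H1 H2;
by split; rewrite eq_sym.
Qed.

Lemma ex_notin (T : finType) (S : {set T}) : (#|S| < #|T|)%N -> exists w, w \notin S.
Proof.
move=> H; case: (pickP [pred w | w \notin S]) => [w Hw|Hn]; first by exists w.
exfalso; have HS : S = setT.
  by apply/setP=> w; rewrite in_setT; move: (Hn w) => /= /negbFE.
by rewrite HS cardsT ltnn in H.
Qed.

Lemma noloop (V : finType) m (E : 'I_m -> V * V) k u w :
  is_ordered_graph E -> E k = (u, w) \/ E k = (w, u) -> u != w.
Proof.
move=> [Hl _] [] Hk; move: (Hl k); rewrite Hk /= => H; apply/eqP => H'; apply: H; by rewrite H'.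
Qed.

Section G.
Variables (V : finType) (m d : nat) (E : 'I_m -> V * V).
Hypotheses (Hd : (1 <= d)%N) (HE : is_ordered_graph E) (HK : k_connected E 3).

Lemma GT1 v : exists x, meas_set d E x /\ (forall k, ~~ ep E v k -> x k = 0) /\
  (forall k, ep E v k -> x k <> 0).
Proof.
set q := fun u => pt d (u == v).
exists (meas E q); split; first by exists q.
split => k.
  rewrite /ep /meas /q; case: (E k) => a b /= /norP [Ha Hb].
  rewrite sqdist_pt.
  have -> : (a == v) = false by apply/eqP => H; rewrite H eqxx in Ha.
  by have -> : (b == v) = false by apply/eqP => H; rewrite H eqxx in Hb.
case/(ep_other HE) => u [Huv Hk]; rewrite (meas_pair q Hk) /q sqdist_pt eqxx.
have -> : (u == v) = false by apply/eqP.
by apply: INR_d_neq0.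
Qed.

Lemma Gconst (q : V -> 'I_d -> R) (S : {set V}) :
  (#|S| < 3)%N ->
  (forall k u w, E k = (u, w) -> u \notin S -> w \notin S -> sqdist (q u) (q w) = 0) ->
  forall u w, u \notin S -> w \notin S -> q u = q w.
Proof.
move=> HS Hz u w Hu Hw; apply: (conn_eq (e := adj_minus E S)); last exact: HK.2.
move=> x y /adj_minusP [Hx Hy [k [Hk|Hk]]]; apply: sqdist0.
  exact: (Hz k).
by rewrite sqdist_sym; apply: (Hz k).
Qed.

Lemma GT2 v : forall x, meas_set d E x -> (forall k, ~~ ep E v k -> x k = 0) ->
  forall s t, ep E v s -> ep E v t -> x s = x t.
Proof.
move=> x [q Hq] Hx0 s t Hs Ht.
have Hc : forall u w, u \notin [set v] -> w \notin [set v] -> q u = q w.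
  apply: Gconst; first by rewrite cards1.
  move=> k u w Hk Hu Hw; rewrite -(meas_pair q (or_introl Hk)) -Hq; apply: Hx0.
  by apply: (nep_pair (or_introl Hk)); rewrite -in_set1.
case: (ep_other HE Hs) => u [Hu Hsu]; case: (ep_other HE Ht) => u' [Hu' Htu'].
rewrite !Hq (meas_pair q Hsu) (meas_pair q Htu') (Hc u u') //; rewrite in_set1; by apply/eqP.
Qed.

Lemma Gstar i j : i <> j -> exists k, ep E i k /\ ~~ ep E j k.
Proof.
move=> Hij.
have [w Hw] : exists w, w \notin [set i; j].
  apply: ex_notin; have H := HK.1; rewrite cards2; case: (i != j).
    by apply: (leq_trans _ H).
  by apply: (leq_trans _ H).
have Hiw : i \notin [set j] by rewrite in_set1; apply/eqP.
have Hww : w \notin [set j] by move: Hw; rewrite in_set2 in_set1; case/norP.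
have HS1 : (#|[set j]| < 3)%N by rewrite cards1.
have /connectP [p Hp Hl] := HK.2 [set j] HS1 i w Hiw Hww.
case: p Hp Hl => [|y p] /=.
  by move=> _ Hwi; move: Hw; rewrite Hwi in_set2 eqxx.
case/andP => /adj_minusP [_ Hy [k Hk]] _ _; exists k; split.
  by rewrite /ep; case: Hk => -> /=; rewrite eqxx ?orbT.
apply: (nep_pair Hk); rewrite ?(in_set1) in Hiw Hy. by []. by [].
Qed.

Lemma GT3 v (P : pred 'I_m) : (exists k, ~~ ep E v k /\ P k) -> (exists k, ~~ ep E v k /\ ~~ P k) ->
  ~ Rprop (meas_set d E) (ep E v) P.
Proof.
move=> [k1 [F1 P1]] [k2 [F2 P2]] HR.
pose A z := exists k a, ~~ ep E v k /\ P k /\ (E k = (z, a) \/ E k = (a, z)).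
pose B z := exists k a, ~~ ep E v k /\ ~~ P k /\ (E k = (z, a) \/ E k = (a, z)).
have Hk1 : E k1 = ((E k1).1, (E k1).2) by case: (E k1).
have Hk2 : E k2 = ((E k2).1, (E k2).2) by case: (E k2).
have [z [[k [a [Fk [Pk Hka]]]] [k' [b [Fk' [Pk' Hkb]]]]]] : exists z, A z /\ B z.
  case: (nep_inv F1 (or_introl Hk1)) => Hu1 _.
  case: (nep_inv F2 (or_introl Hk2)) => Hu2 _.
  apply: (walk (e := adj_minus E [set v]) (u := (E k1).1) (w := (E k2).1)).
  - move=> x y /adj_minusP [Hx Hy [k Hk]] _.
    rewrite !in_set1 in Hx Hy.
    have Fk := nep_pair Hk Hx Hy.
    case Pk : (P k).
      by left; exists k, x; split => //; split => //; case: Hk; auto.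
    by right; exists k, y; split => //; rewrite Pk.
  - by apply: HK.2; rewrite ?cards1 ?in_set1.
  - by exists k1, (E k1).2; auto.
  - by exists k2, (E k2).2; auto.
case: (nep_inv Fk Hka) => Hzv Hav.
case: (nep_inv Fk' Hkb) => _ Hbv.
have Haz := noloop HE Hka; have Hbz := noloop HE Hkb.
set py := fun u => pt d (u != z).
set p0 := fun u : V => pt d false.
have [zz [[q Hq] [HX HY]]] := HR (meas E p0) (meas E py)
  (ex_intro _ p0 (fun _ => erefl)) (ex_intro _ py (fun _ => erefl)).
have Hab : q a = q b.
  apply: (@Gconst q [set z; v]).
  - by rewrite cards2; case: (z != v).
  - move=> k0 u w Hk0 Hu Hw; rewrite !in_set2 in Hu Hw.
    case/norP: Hu => Huz Huv; case/norP: Hw => Hwz Hwv.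
    have F0 := nep_pair (or_introl Hk0) Huv Hwv.
    rewrite -(meas_pair q (or_introl Hk0)) -Hq.
    case P0 : (P k0).
      by rewrite HX // (meas_pair p0 (or_introl Hk0)) /p0 sqdist_xx.
    by rewrite HY ?P0 // (meas_pair py (or_introl Hk0)) /py Huz Hwz sqdist_xx.
  - by rewrite in_set2 negb_or eq_sym Haz.
  - by rewrite in_set2 negb_or eq_sym Hbz.
have Hza : q z = q a.
  apply: sqdist0; rewrite -(meas_pair q Hka) -Hq HX // (meas_pair p0 Hka) /p0 sqdist_xx //.
have := HY k' Fk' Pk'.
rewrite Hq (meas_pair q Hkb) (meas_pair py Hkb) Hza Hab sqdist_xx /py sqdist_pt eqxx.
rewrite eq_sym in Hbz; rewrite Hbz /=.
by move=> H; apply: (INR_d_neq0 Hd); rewrite -H.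
Qed.

End G.

Section H.
Variables (W : finType) (m d : nat) (EH : 'I_m -> W * W) (D : pred 'I_m).
Hypotheses (Hd : (1 <= d)%N) (HE : is_ordered_graph EH).
Hypothesis HD : exists s, D s.
Hypothesis T1 : exists x, meas_set d EH x /\ (forall k, ~~ D k -> x k = 0) /\
  (forall k, D k -> x k <> 0).
Hypothesis T2 : forall x, meas_set d EH x -> (forall k, ~~ D k -> x k = 0) ->
  forall s t, D s -> D t -> x s = x t.
Hypothesis T3 : forall P : pred 'I_m, (exists k, ~~ D k /\ P k) ->
  (exists k, ~~ D k /\ ~~ P k) -> ~ Rprop (meas_set d EH) D P.

Definition Fadj : rel W := fun u w =>
  [exists k, ~~ D k && ((EH k == (u, w)) || (EH k == (w, u)))].

Lemma FadjP u w : Fadj u w -> exists k, ~~ D k /\ (EH k = (u, w) \/ EH k = (w, u)).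
Proof.
by case/existsP => k /andP [Hk /orP [] /eqP H]; exists k; split => //; [left|right].
Qed.

Lemma Fadj_edge k u w : ~~ D k -> EH k = (u, w) \/ EH k = (w, u) -> Fadj u w.
Proof.
move=> Hk He; apply/existsP; exists k; rewrite Hk /=.
by case: He => ->; rewrite eqxx ?orbT.
Qed.

Lemma ep_pair (V : finType) (E : 'I_m -> V * V) v k :
  ep E v k -> exists u, E k = (v, u) \/ E k = (u, v).
Proof.
rewrite /ep; case: (E k) => a b /= /orP [] /eqP ->; [exists b|exists a]; auto.
Qed.

Lemma ctrans (T : finType) (e : rel T) x y z : connect e x y -> connect e y z -> connect e x z.
Proof. move=> H1 H2; exact: (connect_trans H1 H2). Qed.

Lemma Hmain : exists w, forall k, D k = ep EH w k.
Proof.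
case: HD => s Ds.
have Hs : EH s = ((EH s).1, (EH s).2) by case: (EH s).
set a := (EH s).1 in Hs; set b := (EH s).2 in Hs.
have Hab := noloop HE (or_introl Hs).
have NC : ~~ connect Fadj a b.
  apply/negP => Hc.
  case: T1 => x [[q Hq] [Hx0 Hx1]].
  have Heq : q a = q b.
    apply: (conn_eq (e := Fadj)) Hc => u w /FadjP [k [Dk Hk]].
    by apply: sqdist0; rewrite -(meas_pair q Hk) -Hq Hx0.
  by apply: (Hx1 s Ds); rewrite Hq (meas_pair q (or_introl Hs)) Heq sqdist_xx.
pose hasF w := exists k u, ~~ D k /\ (EH k = (w, u) \/ EH k = (u, w)).
have NB : ~ (hasF a /\ hasF b).
  move=> [[k [u [Dk Hk]]] [k' [u' [Dk' Hk']]]].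
  pose P : pred 'I_m := fun k => connect Fadj a (EH k).1.
  have P12 : forall k, ~~ D k -> P k -> connect Fadj a (EH k).2.
    move=> k0 D0 P0; apply: (ctrans P0); apply: connect1.
    apply: (Fadj_edge D0); left; by case: (EH k0).
  have P21 : forall k, ~~ D k -> connect Fadj a (EH k).2 -> P k.
    move=> k0 D0 P0; apply: (ctrans P0); apply: connect1.
    apply: (Fadj_edge D0); right; by case: (EH k0).
  apply: (T3 (P := P)).
  - exists k; split => //; rewrite /P; case: (Hk) => He; rewrite He /=; first exact: connect0.
    by apply: connect1; apply: (Fadj_edge Dk); right.
  - exists k'; split => //; apply/negP; rewrite /P; case: (Hk') => He; rewrite He /= => Hc.
      by move/negP: NC; apply.
    move/negP: NC; apply; apply: (ctrans Hc); apply: connect1.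
    by apply: (Fadj_edge Dk'); left.
  - move=> x y [q1 Hq1] [q2 Hq2].
    pose q := fun u => if connect Fadj a u then q1 u else q2 u.
    exists (meas EH q); split; first by exists q.
    split => k0 D0 P0.
      by rewrite Hq1 /meas /q (P0 : connect _ _ _) (P12 _ D0 P0).
    have N2 : connect Fadj a (EH k0).2 = false.
      by apply/negP => H; move/negP: P0; apply; apply: P21.
    by rewrite Hq2 /meas /q N2 (negbTE (P0 : ~~ connect Fadj a (EH k0).1)).
have [w [Hw NF]] : exists w, (w = a \/ w = b) /\ ~ hasF w.
  case: (classic (hasF a)) => Ha; last by exists a; auto.
  case: (classic (hasF b)) => Hb; last by exists b; auto.
  by case: NB.
exists w => k; apply/idP/idP => Hk; last first.
  apply/negPn/negP => Dk; apply: NF.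
  by case: (ep_pair Hk) => u Hu; exists k, u.
apply/negPn/negP => Nk.
set qw := fun u => pt d (u == w).
have Hx0 : forall k, ~~ D k -> meas EH qw k = 0.
  move=> k0 D0; have E0 : EH k0 = ((EH k0).1, (EH k0).2) by case: (EH k0).
  rewrite (meas_pair qw (or_introl E0)) /qw sqdist_pt.
  have -> : ((EH k0).1 == w) = false.
    by apply/eqP => H; apply: NF; exists k0, (EH k0).2; split => //; left; rewrite -H.
  have -> : ((EH k0).2 == w) = false.
    by apply/eqP => H; apply: NF; exists k0, (EH k0).1; split => //; right; rewrite -H.
  by [].
have := T2 (ex_intro _ qw (fun _ => erefl)) Hx0 Ds Hk.
rewrite (meas_pair qw (or_introl Hs)) /qw sqdist_pt.
have Ek : EH k = ((EH k).1, (EH k).2) by case: (EH k).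
rewrite (meas_pair qw (or_introl Ek)) sqdist_pt.
move: Nk; rewrite /ep => /norP [N1 N2]; rewrite ![(_ == w)]eq_sym (negbTE N1) (negbTE N2) /=.
have -> : ((w == a) == (w == b)) = false.
  have Hab1 : (a == b) = false := negbTE Hab.
  have Hba1 : (b == a) = false by rewrite eq_sym.
  by case: Hw => ->; rewrite eqxx ?Hab1 ?Hba1.
by apply: INR_d_neq0.
Qed.

End H.

Lemma Rprop_ext m (M1 M2 : ('I_m -> R) -> Prop) D P :
  (forall x, M1 x <-> M2 x) -> Rprop M2 D P -> Rprop M1 D P.
Proof.
move=> Heq HR x y /Heq Hx /Heq Hy; case: (HR x y Hx Hy) => z [Hz H]; exists z; split => //.
exact/Heq.
Qed.

End Aux.

Theorem mainTheorem3 (d n nH m : nat)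
  (EG : 'I_m -> 'I_n * 'I_n) (EH : 'I_m -> 'I_nH * 'I_nH) :
  (1 <= d)%N ->
  is_ordered_graph EG -> k_connected EG 3 ->
  is_ordered_graph EH -> no_isolated EH ->
  (forall x : 'I_m -> R, meas_set d EG x <-> meas_set d EH x) ->
  exists sigma : 'I_n -> 'I_nH, bijective sigma /\
    forall k, same_upair (EH k) (sigma (EG k).1, sigma (EG k).2).
Proof.
move=> Hd HG HK HH Hiso Heq.
have Hex : forall v, exists w, forall k, ep EG v k = ep EH w k.
  move=> v; apply: (@Hmain _ m d EH (ep EG v) Hd HH).
  - have [j Hj] : exists j, j \notin [set v].
      by apply: ex_notin; rewrite cards1; apply: (leq_trans _ HK.1).
    have [k [Hk _]] : exists k, ep EG v k /\ ~~ ep EG j k.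
      by apply: (Gstar HK); move=> H; move: Hj; rewrite H in_set1 eqxx.
    by exists k.
  - case: (GT1 Hd HG v) => x [Hx H]; exists x; split => //; exact/Heq.
  - move=> x /Heq Hx; exact: (GT2 HG HK Hx).
  - move=> P H1 H2 HR; apply: (GT3 Hd HG HK H1 H2).
    by apply: (Rprop_ext Heq).
pose sigma v := proj1_sig (constructive_indefinite_description _ (Hex v)).
have Hsig : forall v k, ep EG v k = ep EH (sigma v) k.
  by move=> v; rewrite /sigma; case: (constructive_indefinite_description _ _).
have Hinj : forall i j, sigma i = sigma j -> i = j.
  move=> i j Hij; apply: NNPP => Nij.
  case: (Gstar HK Nij) => k [H1 H2].
  by move: H2; rewrite Hsig -Hij -Hsig H1.
have Hedge : forall k, same_upair (EH k) (sigma (EG k).1, sigma (EG k).2).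
  move=> k.
  have Ek : EG k = ((EG k).1, (EG k).2) by case: (EG k).
  have Hne := noloop HG (or_introl Ek).
  have Hne' : sigma (EG k).1 != sigma (EG k).2.
    by apply/eqP => H; move/eqP: Hne; apply; apply: Hinj.
  have E1 : ep EH (sigma (EG k).1) k by rewrite -Hsig /ep eqxx.
  have E2 : ep EH (sigma (EG k).2) k by rewrite -Hsig /ep eqxx orbT.
  move: E1 E2 Hne'; rewrite /ep /same_upair.
  case: (EH k) => c e /=.
  case/orP => /eqP ->; case/orP => /eqP ->; rewrite ?eqxx //; auto.
have Hsurj : forall w, exists v, sigma v = w.
  move=> w; case: (Hiso w) => k Hk; have := Hedge k.
  rewrite /same_upair => -[] [H1 H2]; case: Hk => ->; rewrite ?H1 ?H2 /=; eauto.
pose tau w := proj1_sig (constructive_indefinite_description _ (Hsurj w)).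
have Htau : forall w, sigma (tau w) = w.
  by move=> w; rewrite /tau; case: (constructive_indefinite_description _ _).
exists sigma; split => //.
exists tau => [v|w]; last exact: Htau.
by apply: Hinj; rewrite Htau.
Qed.
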